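(* Every Young subgroup $\mathrm{Sym}(\lambda)\leq\mathrm{Sym}(n)$, with its natural action on $\{1,\dots,n\}$, has the EKR property.
   Context: For a partition $\lambda=[\lambda_1,\dots,\lambda_k]$ of $n$, let $\Omega_i=\{\lambda_1+\cdots+\lambda_{i-1}+1,\dots,\lambda_1+\cdots+\lambda_i\}$; the Young subgroup $\mathrm{Sym}(\lambda)$ is the subgroup $\mathrm{Sym}(\Omega_1)\cdots\mathrm{Sym}(\Omega_k)$ of permutations preserving each $\Omega_i$. Two permutations $\pi,\tau$ intersect if $\pi\tau^{-1}$ has a fixed point; a subset is intersecting if every pair intersects; a group has the EKR property if every intersecting subset has size at most the size of the largest point-stabilizer. *)

(* Defs.v *)
From mathcomp Require Import all_boot all_fingroup.
Set Implicit Arguments. Unset Strict Implicit. Unset Printing Implicit Defensive.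
Import GroupScope.

Definition is_partition (n : nat) (lam : seq nat) : bool :=
  [&& sumn lam == n, sorted geq lam & all (fun k => 0 < k) lam].

(* Omega_i = {lam_1+...+lam_{i-1}+1, ..., lam_1+...+lam_i}, 0-indexed:
   points x : 'I_n with sumn (take i lam) <= x < sumn (take i.+1 lam). *)
Definition Omega (n : nat) (lam : seq nat) (i : nat) : {set 'I_n} :=
  [set x : 'I_n | sumn (take i lam) <= x < sumn (take i.+1 lam)].

Definition young (n : nat) (lam : seq nat) : {set 'S_n} :=
  [set s : 'S_n | [forall i : 'I_(size lam), forall x : 'I_n,
       (s x \in Omega n lam i) == (x \in Omega n lam i)]].

Definition stab (n : nat) (G : {set 'S_n}) (x : 'I_n) : {set 'S_n} :=
  [set g in G | g x == x].

Definition perm_intersect (n : nat) (p t : 'S_n) : Prop :=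
  exists x : 'I_n, (p * t^-1) x = x.

Definition intersecting (n : nat) (S : {set 'S_n}) : Prop :=
  forall p t, p \in S -> t \in S -> p != t -> perm_intersect p t.

Definition EKR (n : nat) (G : {set 'S_n}) : Prop :=
  forall S : {set 'S_n}, S \subset G -> intersecting S ->
    #|S| <= \max_(x : 'I_n) #|stab G x|.

(* Main.v *)
Require Import Defs.
From mathcomp Require Import all_boot all_fingroup zify.
From Stdlib Require Import Lia.

Fixpoint bst (lam : seq nat) (x : nat) : nat :=
  match lam with [::] => 0 | l :: lam' => if x < l then 0 else l + bst lam' (x - l) end.
Fixpoint blen (lam : seq nat) (x : nat) : nat :=
  match lam with [::] => 0 | l :: lam' => if x < l then l else blen lam' (x - l) end.

Lemma bst_le lam x : x < sumn lam ->
  bst lam x <= x < bst lam x + blen lam x /\ bst lam x + blen lam x <= sumn lam.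
Proof.
elim: lam x => [|l lam IH] x //=.
case: ifP => Hx Hs; first lia.
have [] := IH (x - l) ltac:(lia). lia.
Qed.

Lemma bst_same lam x y : x < sumn lam -> bst lam x <= y < bst lam x + blen lam x ->
  bst lam y = bst lam x /\ blen lam y = blen lam x.
Proof.
elim: lam x y => [|l lam IH] x y //=.
case: ifP => Hx Hs Hy.
  by have -> : y < l by lia.
have -> : (y < l) = false by lia.
have [-> ->] := IH (x - l) (y - l) ltac:(lia) ltac:(lia). by [].
Qed.

Lemma bst_omega lam x : x < sumn lam -> exists2 i, i < size lam &
  sumn (take i lam) = bst lam x /\ sumn (take i.+1 lam) = bst lam x + blen lam x.
Proof.
elim: lam x => [|l lam IH] x //=.
case: ifP => Hx Hs.
  exists 0 => //=. rewrite take0 /=. lia.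
have [i Hi [E1 E2]] := IH (x - l) ltac:(lia).
exists i.+1 => //=. rewrite E1 E2. lia.
Qed.

Lemma omega_same lam i x y : x < sumn lam -> bst lam x <= y < bst lam x + blen lam x ->
  (sumn (take i lam) <= x < sumn (take i.+1 lam)) =
  (sumn (take i lam) <= y < sumn (take i.+1 lam)).
Proof.
elim: lam i x y => [|l lam IH] i x y //=.
case: i => [|i] /=.
  case: ifP => Hx Hs Hy; first lia.
  have := @bst_le lam (x-l) ltac:(lia). rewrite take0 /=. lia.
case: ifP => Hx Hs Hy; first lia.
have := IH i (x - l) (y - l) ltac:(lia) ltac:(lia).
have := @bst_le lam (x-l) ltac:(lia). lia.
Qed.

Definition rot lam x := bst lam x + (x - bst lam x).+1 %% blen lam x.

Lemma rot_pow lam x d : x < sumn lam ->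
  iter d (rot lam) x = bst lam x + (x - bst lam x + d) %% blen lam x.
Proof.
move=> Hx; have [/andP[H1 H2] H3] := @bst_le lam x Hx.
elim: d => [|d IH] /=.
  rewrite addn0 modn_small; lia.
rewrite IH /rot.
have Hm : (x - bst lam x + d) %% blen lam x < blen lam x by apply: ltn_pmod; lia.
have [-> ->] := @bst_same lam x (bst lam x + (x - bst lam x + d) %% blen lam x) Hx ltac:(lia).
rewrite addKn -addn1 modnDml -addnA addn1. by []. Qed.

Lemma rot_in lam x : x < sumn lam ->
  bst lam x <= rot lam x < bst lam x + blen lam x.
Proof.
move=> Hx; have [/andP[H1 H2] H3] := @bst_le lam x Hx.
rewrite /rot leq_addr /= ltn_add2l ltn_pmod //; lia.
Qed.

Lemma rot_inj lam x y : x < sumn lam -> y < sumn lam -> rot lam x = rot lam y -> x = y.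
Proof.
move=> Hx Hy E.
have [Bx Lx] := @bst_same lam x (rot lam x) Hx (@rot_in lam x Hx).
have [By Ly] := @bst_same lam y (rot lam y) Hy (@rot_in lam y Hy).
have [/andP[H1 H2] H3] := @bst_le lam x Hx.
have [/andP[H4 H5] H6] := @bst_le lam y Hy.
have Eb : bst lam x = bst lam y by rewrite -Bx -By E.
have El : blen lam x = blen lam y by rewrite -Lx -Ly E.
have E' : (x - bst lam x).+1 %% blen lam x = (y - bst lam x).+1 %% blen lam x.
  by move: E; rewrite /rot -Eb -El; apply: addnI.
have E2 : (x - bst lam x == y - bst lam x %[mod blen lam x]).
  by rewrite -(eqn_modDr 1) !addn1 E'.
move: E2; rewrite !modn_small; last 2 first.
- rewrite El; lia.
- lia.
move/eqP; lia.
Qed.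

Lemma rot_derange lam z d : z < sumn lam -> 0 < d < blen lam z -> iter d (rot lam) z != z.
Proof.
move=> Hz /andP[Hd1 Hd2]; rewrite rot_pow //.
have [/andP[H1 H2] H3] := @bst_le lam z Hz.
apply/negP => /eqP E.
have E2 : (z - bst lam z + d) %% blen lam z = (z - bst lam z) + 0 by lia.
move: E2 => /eqP; rewrite -(modn_small (m := z - bst lam z + 0) (d := blen lam z)); last lia.
rewrite eqn_modDl mod0n modn_small //; lia.
Qed.

Set Implicit Arguments.
Section Grp.
Variables (n : nat) (lam : seq nat).
Hypothesis Hs : sumn lam = n.
Local Open Scope group_scope.

Definition rotI (x : 'I_n) : 'I_n := insubd x (rot lam x).

Lemma val_rotI x : val (rotI x) = rot lam x.
Proof.
rewrite val_insubd; have := @rot_in lam x; rewrite Hs ltn_ord => /(_ isT) /andP[_ H].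
have [_ H3] := @bst_le lam x ltac:(rewrite Hs; exact: ltn_ord).
by move: H3; rewrite Hs => H3; rewrite (leq_trans H H3).
Qed.

Lemma rotI_inj : injective rotI.
Proof.
move=> x y E; apply: val_inj; apply: (@rot_inj lam); rewrite ?Hs ?ltn_ord //.
by rewrite -!val_rotI E.
Qed.

Definition cc : 'S_n := perm rotI_inj.

Lemma cpow d (x : 'I_n) : val ((cc ^+ d) x) = iter d (rot lam) x.
Proof.
elim: d x => [|d IH] x; first by rewrite expg0 perm1.
by rewrite expgSr permM /cc permE val_rotI IH.
Qed.

Lemma young_mul s t : s \in young n lam -> t \in young n lam -> s * t \in young n lam.
Proof.
rewrite !inE => /forallP Hs' /forallP Ht; apply/forallP => i; apply/forallP => x.
rewrite permM.
by move: (Hs' i) (Ht i) => /forallP /(_ x) /eqP <- /forallP /(_ (s x)) /eqP ->.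
Qed.

Lemma young_inv s : s \in young n lam -> s^-1 \in young n lam.
Proof.
rewrite !inE => /forallP Hs'; apply/forallP => i; apply/forallP => x.
by move: (Hs' i) => /forallP /(_ (s^-1 x)) /eqP; rewrite permKV => ->.
Qed.

Lemma young_pow s d : s \in young n lam -> s ^+ d \in young n lam.
Proof.
move=> H; elim: d => [|d IH].
  rewrite expg0 inE; apply/forallP => i; apply/forallP => x; by rewrite perm1.
by rewrite expgSr young_mul.
Qed.

Lemma cc_young : cc \in young n lam.
Proof.
rewrite inE; apply/forallP => i; apply/forallP => x.
rewrite /cc permE !inE; apply/eqP; rewrite val_rotI.
have Hx : x < sumn lam by rewrite Hs.
by rewrite (@omega_same lam i x (rot lam x) Hx (@rot_in lam x Hx)).
Qed.

Lemma young_block s (x : 'I_n) : s \in young n lam ->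
  bst lam x <= s x < bst lam x + blen lam x.
Proof.
have Hx : x < sumn lam by rewrite Hs.
have [i Hi [E1 E2]] := @bst_omega lam x Hx.
have [/andP[H1 H2] H3] := @bst_le lam x Hx.
rewrite inE => /forallP /(_ (Ordinal Hi)) /forallP /(_ x).
by rewrite !inE /= E1 E2 H1 H2 => /eqP.
Qed.

End Grp.
Unset Implicit Arguments.

Local Open Scope group_scope.
Theorem corollary20 (n : nat) (lam : seq nat) :
  0 < n -> is_partition n lam -> EKR (young n lam).
Proof.
move=> n0 /and3P[/eqP Hs _ _] S SG HS.
have [x0 _ Hmin] := @arg_minnP _ (Ordinal n0) xpredT (blen lam) isT.
have Hx0 : x0 < sumn lam by rewrite Hs.
have [/andP[H1 H2] H3] := @bst_le lam x0 Hx0.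
set a := bst lam x0 in H1 H2 H3 *.
set m := blen lam x0 in H2 H3 Hmin *.
have Ha : a < n by rewrite -Hs; apply: leq_ltn_trans Hx0.
pose x : 'I_n := Ordinal Ha.
have [Bx Lx] := @bst_same lam x0 a Hx0 ltac:(by rewrite leqnn (leq_ltn_trans H1 H2)).
have Hxs : (x : nat) < sumn lam by rewrite Hs.
pose j (s : 'S_n) := s x - a.
have Hj : forall s, s \in young n lam -> j s < m /\ (cc lam Hs ^+ j s) x = s x.
  move=> s sY; have := young_block Hs x sY.
  rewrite /= Bx Lx => /andP[K1 K2].
  split; first by rewrite /j ltn_subLR // addnC.
  apply: val_inj; rewrite cpow /= rot_pow // Bx Lx subnn add0n modn_small; last by rewrite /j ltn_subLR // addnC.
  by rewrite /j subnKC.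
pose f (s : 'S_n) := s * (cc lam Hs ^+ j s)^-1.
have key : forall s t, s \in S -> t \in S -> s != t -> f s = f t -> j t <= j s -> False.
  move=> s t sS tS Hne E Hle.
  have [y Hy] := HS s t sS tS Hne.
  move: Hy; rewrite permM => /(congr1 t); rewrite permKV => Est.
  have Es : s = t * cc lam Hs ^+ (j s - j t).
    have E2 := congr1 (fun g => g * cc lam Hs ^+ j s) E; rewrite /f /= mulgKV in E2; rewrite {1}E2.
    by rewrite -{1}(subnKC Hle) expgD !mulgA mulgKV.
  move: Est; rewrite {1}Es permM.
  case Hd : (j s - j t) => [|d].
    by move: Es Hne; rewrite Hd expg0 mulg1 => ->; rewrite eqxx.
  move=> /(congr1 val); rewrite cpow => /eqP.
  have Hty : (t y : nat) < sumn lam by rewrite Hs.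
  apply/negP; apply: rot_derange => //.
  have [Kj _] := Hj s (subsetP SG s sS).
  rewrite /=; apply: leq_trans (Hmin (t y) isT); lia.
have Hf : {in S &, injective f}.
  move=> s t sS tS E; apply/eqP; apply/negPn/negP => Hne.
  case: (leqP (j t) (j s)) => Hle.
    exact: key s t sS tS Hne E Hle.
  by apply: (key t s tS sS _ (esym E) (ltnW Hle)); rewrite eq_sym.
have Himg : f @: S \subset stab (young n lam) x.
  apply/subsetP => g /imsetP[s sS ->]; have sY := subsetP SG s sS.
  rewrite inE; apply/andP; split.
    by rewrite young_mul // young_inv // young_pow // cc_young.
  have [_ Ej] := Hj s sY.
  by rewrite /f permM -Ej permK.
rewrite -(card_in_imset Hf); apply: leq_trans (subset_leq_card Himg) _.
exact: leq_bigmax.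
Qed.
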